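(* Let $a,b\in C^0(\mathbb{R})$ be even and positive, and let $G\in C^0(\mathbb{R})$ be even with $G(s)\ge G(M)=0$ for all $s\in\mathbb{R}$ and $G(s)>0$ for $s\in[0,M)$, for some $M>0$. Let $L>0$, $m\ge0$ and $t\in[0,L)$. Then $$\inf_{v\in H^1_m((-L,L))}\mathcal{E}(v,(-L,L))\le \frac{M^2+m^2}{\int_t^L 1/a}+2G_1\int_t^L b,$$ where $G_1:=\sup_{s\in(-m,\overline M)}G(s)$ and $\overline M:=\max\{m,M\}$.
   Context: $H^1_m((-L,L)):=\{u\in H^1((-L,L)):u(-L)=-m,\ u(L)=m\}$ and $\mathcal{E}(u,(-L,L)):=\int_{-L}^L\{\tfrac12(u')^2a(x)+G(u)b(x)\}\,dx$. *)

(* Defs.v *)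
From HB Require Import structures.
From mathcomp Require Import all_boot all_order all_algebra.
From mathcomp Require Import all_classical all_reals all_analysis.
Set Implicit Arguments. Unset Strict Implicit. Unset Printing Implicit Defensive.
Import Order.TTheory GRing.Theory Num.Theory.
Import numFieldNormedType.Exports.
Local Open Scope classical_set_scope.
Local Open Scope ring_scope.

(* H^1_m((-L,L)) in the standard one-dimensional form (Brezis, Thm 8.2):
   u (its continuous representative) is an indefinite integral of some
   g in L^2(-L,L), which is then the weak derivative u' of u, with the
   boundary values u(-L) = -m, u(L) = m. *)
Definition H1m (R : realType) (L m : R) (u g : R -> R) : Prop :=
  measurable_fun `[-L, L] g /\
      (@lebesgue_measure R).-integrable `[-L, L] (fun x => (g x)%:E) /\
      (@lebesgue_measure R).-integrable `[-L, L] (fun x => ((g x) ^+ 2)%:E) /\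
      (forall x, -L <= x <= L ->
         u x = - m + \int[@lebesgue_measure R]_(y in `[-L, x]) g y) /\
      u (- L) = - m /\ u L = m.

Definition energy (R : realType) (a b G : R -> R) (L : R) (u g : R -> R)
  : \bar R :=
  (\int[@lebesgue_measure R]_(x in `[(- L)%R, L])
      ((2^-1 * (g x) ^+ 2 * a x + G (u x) * b x)%:E))%E.

Definition inf_energy (R : realType) (a b G : R -> R) (L m : R) : \bar R :=
  ereal_inf [set E | exists u g, H1m L m u g /\ E = energy a b G L u g].

(* Main.v *)
Require Import Defs.
From HB Require Import structures.
From mathcomp Require Import all_boot all_order all_algebra.
From mathcomp Require Import all_classical all_reals all_analysis measurable_realfun.
From mathcomp Require Import ring lra.
Import Order.TTheory GRing.Theory Num.Theory.
Import numFieldNormedType.Exports.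
Local Open Scope classical_set_scope.
Local Open Scope ring_scope.
Section H.
Variable R : realType.
Local Notation mu := (@lebesgue_measure R).

Lemma cint (f : R -> R) (x y : R) : continuous f ->
  mu.-integrable `[x, y] (EFin \o f).
Proof.
move=> cf; apply: continuous_compact_integrable; first exact: segment_compact.
exact: continuous_subspaceT.
Qed.

Lemma cintE (f : R -> R) (x y : R) : continuous f ->
  (\int[mu]_(z in `[x, y]) (f z)%:E)%E = (\int[mu]_(z in `[x, y]) f z)%:E.
Proof.
move=> cf; rewrite /Rintegral fineK //; apply: integrable_fin_num => //.
exact: cint.
Qed.

Lemma cmono (f : R -> R) (c x d : R) : continuous f -> (forall z, 0 <= f z) ->
  c <= x -> x <= d ->
  0 <= \int[mu]_(z in `[c, x]) f z <= \int[mu]_(z in `[c, d]) f z.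
Proof.
move=> cf f0 cx xd; apply/andP; split; first exact: Rintegral_ge0.
rewrite -subr_ge0 (@Rintegral_itvB _ f (BLeft c) (BRight d) x).
- exact: Rintegral_ge0.
- exact: cint.
- by rewrite bnd_simp.
- by rewrite bnd_simp.
Qed.

Lemma cpos (f : R -> R) (x y : R) : continuous f -> (forall z, 0 < f z) ->
  x < y -> 0 < \int[mu]_(z in `[x, y]) f z.
Proof.
move=> cf f0 xy.
have [c _ hc] := EVT_min (ltW xy) (continuous_subspaceT cf).
apply: (@lt_le_trans _ _ (\int[mu]_(z in `[x, y]) (cst (f c)) z)).
  have h : fine (mu `[x, y]) = y - x.
    by rewrite lebesgue_measure_itv /= lte_fin xy.
  rewrite Rintegral_cst // h.
  by apply: mulr_gt0 => //; rewrite subr_gt0.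
apply: le_Rintegral => //.
- by apply: cint; exact: cst_continuous.
- exact: cint.
Qed.

Lemma ceven (f : R -> R) (x y : R) : continuous f -> (forall z, f (- z) = f z) ->
  x <= y -> \int[mu]_(z in `[- y, - x]) f z = \int[mu]_(z in `[x, y]) f z.
Proof.
move=> cf fe xy; rewrite /Rintegral integration_by_substitution_oppr //.
  by congr fine; apply: eq_integral => z _; rewrite /= fe.
exact: continuous_subspaceT.
Qed.

Lemma in_closure_itv (lo hi s : R) : lo < hi -> lo <= s <= hi ->
  closure `]lo, hi[ s.
Proof.
move=> lh /andP[ls sh] B /nbhs_ballP[e e0 sB].
have [sh'|hs] := ltP s hi.
  have [d [d0 d1 d2]] : exists d : R, [/\ 0 < d, d <= e / 2 & d <= (hi - s) / 2].
    exists (Num.min (e / 2) ((hi - s) / 2)); split.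
    - by rewrite lt_min !divr_gt0 // subr_gt0.
    - by rewrite ge_min lexx.
    - by rewrite ge_min lexx orbT.
  exists (s + d); split.
    by rewrite /= in_itv /=; apply/andP; split; lra.
  apply: sB; rewrite /ball /= (_ : s - (s + d) = - d); last by lra.
  by rewrite normrN gtr0_norm //; lra.
have [d [d0 d1 d2]] : exists d : R, [/\ 0 < d, d <= e / 2 & d <= (s - lo) / 2].
  exists (Num.min (e / 2) ((s - lo) / 2)); split.
  - by rewrite lt_min !divr_gt0 // subr_gt0; apply: lt_le_trans hs.
  - by rewrite ge_min lexx.
  - by rewrite ge_min lexx orbT.
exists (s - d); split.
  by rewrite /= in_itv /=; apply/andP; split; lra.
apply: sB; rewrite /ball /= (_ : s - (s - d) = d); last by lra.
by rewrite gtr0_norm //; lra.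
Qed.

Lemma le_supG (G : R -> R) (lo hi s : R) : continuous G -> lo < hi ->
  lo <= s <= hi -> G s <= sup [set G y | y in `]lo, hi[].
Proof.
move=> cG lh shi.
set S := [set G y | y in `]lo, hi[].
have hs : has_sup S.
  split.
    exists (G ((lo + hi) / 2)), ((lo + hi) / 2) => //.
    by rewrite /= in_itv /=; apply/andP; split; lra.
  have [c _ hc] := EVT_max (ltW lh) (continuous_subspaceT cG).
  exists (G c) => _ [y yI <-]; apply: hc.
  by move: yI; rewrite /= !in_itv /= => /andP[h1 h2]; rewrite ltW // ltW.
have C : closed (G @^-1` [set x | x <= sup S]).
  by move/continuous_closedP : cG; apply; exact: closed_le.
have sub : `]lo, hi[ `<=` G @^-1` [set x | x <= sup S].
  by move=> y yI; apply: sup_upper_bound hs _ _; exists y.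
have E := (closure_id _).1 C.
suff : (G @^-1` [set x | x <= sup S]) s by [].
rewrite E; apply: (closureS sub); exact: in_closure_itv.
Qed.

Lemma contM (f g : R -> R) : continuous f -> continuous g ->
  continuous (fun x => f x * g x).
Proof. by move=> cf cg x; exact: (continuousM (cf x) (cg x)). Qed.

Lemma contD (f g : R -> R) : continuous f -> continuous g ->
  continuous (fun x => f x + g x).
Proof. by move=> cf cg x; exact: (continuousD (cf x) (cg x)). Qed.

Lemma contC (c : R) : continuous (fun _ : R => c).
Proof. by move=> x; exact: cst_continuous. Qed.

End H.

Section Main.
Variables (R : realType) (a b G : R -> R) (M L m t : R).
Hypotheses (ca : continuous a) (cb : continuous b) (cG : continuous G).
Hypotheses (ea : forall x, a (- x) = a x) (eb : forall x, b (- x) = b x).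
Hypotheses (eG : forall x, G (- x) = G x).
Hypotheses (a0 : forall x, 0 < a x) (b0 : forall x, 0 < b x).
Hypotheses (M0 : 0 < M) (GM : G M = 0) (Gmin : forall s, G M <= G s).
Hypotheses (L0 : 0 < L) (m0 : 0 <= m) (t0 : 0 <= t) (tL : t < L).
Local Notation mu := (@lebesgue_measure R).

Let k x := (a x)^-1.
Let kc : continuous k.
Proof. move=> x; apply: continuousV; last exact: ca. by rewrite gt_eqF. Qed.
Let kpos x : 0 < k x.
Proof. by rewrite /k invr_gt0. Qed.
Let ka x : k x * a x = 1.
Proof. by rewrite /k mulVf // gt_eqF. Qed.
Let ke x : k (- x) = k x.
Proof. by rewrite /k ea. Qed.

Let I := \int[mu]_(x in `[t, L]) k x.
Let Ipos : 0 < I.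
Proof. exact: cpos. Qed.
Let Ieven : \int[mu]_(x in `[- L, - t]) k x = I.
Proof. by apply: ceven => //; exact: ltW. Qed.

Let cl := (M + m) / I.
Let cr := (m - M) / I.
Let clI : cl * I = M + m.
Proof. by rewrite /cl mulfVK // gt_eqF. Qed.
Let crI : cr * I = m - M.
Proof. by rewrite /cr mulfVK // gt_eqF. Qed.

Let gg (x : R) : R := if x < - t then cl * k x else if t < x then cr * k x else 0.
Let uu (x : R) : R := - m + \int[mu]_(y in `[- L, x]) gg y.


Let gm : measurable_fun setT gg.
Proof.
rewrite /gg; apply: measurable_fun_ifT.
- by apply: (@measurable_fun_ltr _ _ _ _ id (cst (- t))).
- by apply: continuous_measurable_fun; apply: contM => //; exact: contC.
apply: measurable_fun_ifT.
- by apply: (@measurable_fun_ltr _ _ _ _ (cst t) id).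
- by apply: continuous_measurable_fun; apply: contM => //; exact: contC.
- exact: measurable_cst.
Qed.

Let gbound x : `|gg x| <= (`|cl| + `|cr|) * k x.
Proof.
have kp := kpos x.
rewrite /gg; case: ifP => _; [|case: ifP => _].
- by rewrite normrM (gtr0_norm kp) ler_pM2r // lerDl.
- by rewrite normrM (gtr0_norm kp) ler_pM2r // lerDr.
- by rewrite normr0 mulr_ge0 // ?addr_ge0 // ltW.
Qed.

Let g2bound x : `|gg x ^+ 2| <= (cl ^+ 2 + cr ^+ 2) * (k x * k x).
Proof.
have kp := kpos x.
rewrite ger0_norm ?sqr_ge0 //.
rewrite /gg; case: ifP => _; [|case: ifP => _].
- by rewrite exprMn -expr2 ler_pM2r ?exprn_gt0 // lerDl sqr_ge0.
- by rewrite exprMn -expr2 ler_pM2r ?exprn_gt0 // lerDr sqr_ge0.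
- by rewrite expr0n /= mulr_ge0 // ?addr_ge0 ?sqr_ge0 // mulr_ge0 // ltW.
Qed.

Let gint : mu.-integrable `[- L, L] (EFin \o gg).
Proof.
apply: (@le_integrable _ _ _ mu _ _ _ (EFin \o (fun x => (`|cl| + `|cr|) * k x))) => //.
- apply/measurable_EFinP; exact: measurable_funS gm.
- move=> x _; rewrite /= lee_fin (le_trans (gbound x)) //.
  by rewrite ler_norm.
- by apply: cint; apply: contM => //; exact: contC.
Qed.

Let g2int : mu.-integrable `[- L, L] (fun x => ((gg x) ^+ 2)%:E).
Proof.
apply: (@le_integrable _ _ _ mu _ _ _ (EFin \o (fun x => (cl ^+ 2 + cr ^+ 2) * (k x * k x)))) => //.
- apply/measurable_EFinP; apply: measurable_funX; exact: measurable_funS gm.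
- move=> x _; rewrite /= lee_fin (le_trans (g2bound x)) //.
  by rewrite ler_norm.
- by apply: cint; apply: contM => //; [exact: contC| exact: contM].
Qed.

Let gintS x y : - L <= x -> y <= L -> mu.-integrable `[x, y] (EFin \o gg).
Proof.
move=> Lx yL; apply: integrableS gint => //.
by apply: subset_itv; rewrite bnd_simp.
Qed.


Ltac prep := have := t0; have := tL; have := L0; have := M0; have := m0;
  have := Ipos; have := clI; have := crI; move=> ? ? ? ? ? ? ? ?.

Let kintS x y : mu.-integrable `[x, y] (EFin \o k).
Proof. exact: cint. Qed.

Let FL x : - L <= x -> x <= - t ->
  \int[mu]_(y in `[- L, x]) gg y = cl * \int[mu]_(y in `[- L, x]) k y.
Proof.
move=> Lx xt.
prep.
have xL : x <= L by lra.
rewrite -(@Rintegral_itv_bndo_bndc _ (BLeft (- L)) x gg); last first.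
  move: (gintS _ _ (lexx (- L)) xL); apply: integrableS => //.
  by apply: subset_itv; rewrite bnd_simp.
have -> : \int[mu]_(y in `[- L, x[) gg y = \int[mu]_(y in `[- L, x[) (cl * k y).
  apply: eq_Rintegral => y; rewrite inE /= in_itv /= => /andP[_ yx].
  by rewrite /gg ifT // (lt_le_trans yx xt).
rewrite (@Rintegral_itv_bndo_bndc _ (BLeft (- L)) x) ?RintegralZl //.
have hc : continuous (fun y => cl * k y) by apply: contM => //; exact: contC.
move: (@cint _ _ (- L) x hc); apply: integrableS => //.
by apply: subset_itv; rewrite bnd_simp.
Qed.

Let FM x : - t <= x <= t -> \int[mu]_(y in `[- L, x]) gg y = M + m.
Proof.
move=> /andP[tx xt]; prep.
have Lt : - L <= - t by lra.
have xL : x <= L by lra.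
have := @Rintegral_itvB _ gg (BLeft (- L)) (BRight x) (- t) (gintS _ _ (lexx (- L)) xL).
rewrite !bnd_simp => /(_ Lt tx).
rewrite (@FL (- t) Lt (lexx _)) Ieven clI.
have -> : \int[mu]_(y in `]- t, x]) gg y = \int[mu]_(y in `]- t, x]) (cst 0 y).
  apply: eq_Rintegral => y; rewrite inE /= in_itv /= => /andP[ty yx].
  by rewrite /gg ltNge (ltW ty) /= ltNge (le_trans yx xt).
rewrite Rintegral_cst // mul0r => h; lra.
Qed.

Let FR x : t <= x <= L ->
  \int[mu]_(y in `[- L, x]) gg y = M + m + cr * \int[mu]_(y in `[t, x]) k y.
Proof.
move=> /andP[tx xL]; prep.
have Lt : - L <= t by lra.
have := @Rintegral_itvB _ gg (BLeft (- L)) (BRight x) t (gintS _ _ (lexx (- L)) xL).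
rewrite !bnd_simp => /(_ Lt tx).
rewrite (@FM t); last by apply/andP; split; lra.
have -> : \int[mu]_(y in `]t, x]) gg y = \int[mu]_(y in `]t, x]) (cr * k y).
  apply: eq_Rintegral => y; rewrite inE /= in_itv /= => /andP[ty yx].
  have : ~~ (y < - t) by rewrite -leNgt; lra.
  by move/negbTE; rewrite /gg => ->; rewrite ty.
have hc : continuous (fun y => cr * k y) by apply: contM => //; exact: contC.
rewrite (@Rintegral_itv_obnd_cbnd _ t (BRight x)); last first.
  move: (@cint _ _ t x hc); apply: integrableS => //.
  by apply: subset_itv; rewrite bnd_simp.
rewrite RintegralZl // => h; lra.
Qed.


Let uuL : uu (- L) = - m.
Proof. by rewrite /uu set_itv1 Rintegral_set1 addr0. Qed.

Let uuR : uu L = m.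
Proof.
prep; rewrite /uu (@FR L); last by apply/andP; split; lra.
rewrite -/I crI; lra.
Qed.

Let uuM x : - t <= x <= t -> uu x = M.
Proof. by move=> h; rewrite /uu FM //; lra. Qed.

Let Mbar := Num.max m M.

Let uubnd x : - L <= x <= L -> - m <= uu x <= Mbar.
Proof.
move=> /andP[Lx xL]; prep.
have mM : m <= Mbar by rewrite le_max lexx.
have MM : M <= Mbar by rewrite le_max lexx orbT.
have [xt|xt] := leP x (- t).
  have /andP[J0 JI] := @cmono _ k (- L) x (- t) kc (fun z => ltW (kpos z)) Lx xt.
  rewrite Ieven in JI.
  have cl0 : 0 <= cl by rewrite divr_ge0 // ?addr_ge0 // ltW.
  have h1 : cl * (\int[mu]_(y in `[- L, x]) k y) <= cl * I by apply: ler_wpM2l.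
  have h2 : 0 <= cl * (\int[mu]_(y in `[- L, x]) k y) by apply: mulr_ge0.
  rewrite /uu (@FL x Lx xt); apply/andP; split; lra.
have [xt2|xt2] := leP x t.
  by rewrite uuM; [apply/andP; split; lra | apply/andP; split; lra].
have /andP[J0 JI] := @cmono _ k t x L kc (fun z => ltW (kpos z)) (ltW xt2) xL.
rewrite -/I in JI.
rewrite /uu (@FR x); last by apply/andP; split; lra.
have [cr0|cr0] := leP 0 cr.
  have h1 : cr * (\int[mu]_(y in `[t, x]) k y) <= cr * I by apply: ler_wpM2l.
  have h2 : 0 <= cr * (\int[mu]_(y in `[t, x]) k y) by apply: mulr_ge0.
  apply/andP; split; lra.
have h1 : cr * I <= cr * (\int[mu]_(y in `[t, x]) k y) by apply: ler_wnM2l => //; exact: ltW.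
have h2 : cr * (\int[mu]_(y in `[t, x]) k y) <= 0 by apply: mulr_le0_ge0 => //; exact: ltW.
apply/andP; split; lra.
Qed.


Let G1 := sup [set G s | s in `]- m, Mbar[].

Let G1b x : - L <= x <= L -> G (uu x) <= G1.
Proof.
move=> /uubnd h; prep; apply: le_supG => //.
by apply: (@lt_le_trans _ _ M); [lra| rewrite le_max lexx orbT].
Qed.

Let G1pos : 0 <= G1.
Proof.
prep; rewrite -GM; apply: le_supG => //.
  by apply: (@lt_le_trans _ _ M); [lra| rewrite le_max lexx orbT].
by apply/andP; split; [lra| rewrite le_max lexx orbT].
Qed.

Let G0 s : 0 <= G s.
Proof. by rewrite -GM. Qed.

Let muu : measurable_fun `[- L, L] uu.
Proof.
prep; have LL : - L <= L by lra.
have pc := parameterized_integral_continuous LL gint.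
have := subspace_continuous_measurable_fun (measurable_itv `[- L, L]) pc.
by move=> mp; rewrite /uu; apply: measurable_funD => //; exact: measurable_cst.
Qed.

Let h x := 2^-1 * gg x ^+ 2 * a x + G (uu x) * b x.

Let hm (D : set R) : measurable D -> D `<=` `[- L, L] -> measurable_fun D (EFin \o h).
Proof.
move=> mD DL; apply/measurable_EFinP; apply: (measurable_funS _ DL) => //.
rewrite /h; apply: measurable_funD; apply: measurable_funM.
- apply: measurable_funM; first exact: measurable_cst.
  by apply: measurable_funX; exact: measurable_funS gm.
- exact: (measurable_funS _ _ (continuous_measurable_fun ca)).
- exact: measurableT_comp (continuous_measurable_fun cG) muu.
- exact: (measurable_funS _ _ (continuous_measurable_fun cb)).
Qed.

Let h0 x : 0 <= h x.
Proof.
rewrite /h; apply: addr_ge0; apply: mulr_ge0.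
- by apply: mulr_ge0; [rewrite invr_ge0 | exact: sqr_ge0].
- exact: ltW.
- exact: G0.
- exact: ltW.
Qed.


Let psiL x := 2^-1 * cl ^+ 2 * k x + G1 * b x.
Let psiR x := 2^-1 * cr ^+ 2 * k x + G1 * b x.
Let cpsiL : continuous psiL.
Proof. by apply: contD; apply: contM => //; exact: contC. Qed.
Let cpsiR : continuous psiR.
Proof. by apply: contD; apply: contM => //; exact: contC. Qed.
Let J := \int[mu]_(x in `[t, L]) b x.

Let psim (f : R -> R) (D : set R) : continuous f -> measurable D ->
  measurable_fun D (EFin \o f).
Proof.
move=> cf mD; apply/measurable_EFinP.
exact: (measurable_funS _ _ (continuous_measurable_fun cf)).
Qed.

Let hA : (\int[mu]_(x in `[(- L)%R, (- t)%R]) (h x)%:E <=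
          (\int[mu]_(x in `[t, L]) psiL x)%:E)%E.
Proof.
prep.
rewrite -ceven //; last by lra.
  rewrite -cintE //.
  apply: ge0_le_integral => //.
  - by move=> x _; rewrite lee_fin.
  - apply: hm => //; apply: subset_itv; rewrite bnd_simp; lra.
  - exact: psim.
  move=> x; rewrite /= in_itv /= => /andP[Lx xt].
  rewrite lee_fin /h /psiL; apply: lerD.
    rewrite /gg; case: ifP => xt'.
      have e : (cl * k x) ^+ 2 * a x = cl ^+ 2 * k x.
        by rewrite /k; field; rewrite gt_eqF.
      by rewrite -mulrA e mulrA.
    have -> : (t < x) = false by apply/negbTE; rewrite -leNgt; lra.
    rewrite expr0n /= mulr0 mul0r; apply: mulr_ge0; last exact: ltW.
    by apply: mulr_ge0; [rewrite invr_ge0 | exact: sqr_ge0].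
  apply: ler_wpM2r; first exact: ltW.
  by apply: G1b; apply/andP; split; lra.
by move=> z; rewrite /psiL ke eb.
Qed.


Let hB : (\int[mu]_(x in `](- t)%R, t]) (h x)%:E = 0)%E.
Proof.
prep; apply: integral0_eq => x; rewrite /= in_itv /= => /andP[tx xt].
rewrite /h uuM; last by apply/andP; split; lra.
have -> : gg x = 0.
  rewrite /gg ifF; last by apply/negbTE; rewrite -leNgt; lra.
  by rewrite ifF //; apply/negbTE; rewrite -leNgt.
by rewrite GM expr0n /= mulr0 mul0r mul0r addr0.
Qed.

Let hC : (\int[mu]_(x in `]t, L]) (h x)%:E <=
          (\int[mu]_(x in `[t, L]) psiR x)%:E)%E.
Proof.
prep.
rewrite -cintE // -integral_itv_obnd_cbnd; last exact: psim.
apply: ge0_le_integral => //.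
- by move=> x _; rewrite lee_fin.
- apply: hm => //; apply: subset_itv; rewrite bnd_simp; lra.
- exact: psim.
move=> x; rewrite /= in_itv /= => /andP[tx xL].
rewrite lee_fin /h /psiR; apply: lerD.
  rewrite /gg ifF; last by apply/negbTE; rewrite -leNgt; lra.
  rewrite ifT //.
  have e : (cr * k x) ^+ 2 * a x = cr ^+ 2 * k x.
    by rewrite /k; field; rewrite gt_eqF.
  by rewrite -mulrA e mulrA.
apply: ler_wpM2r; first exact: ltW.
by apply: G1b; apply/andP; split; lra.
Qed.

Let final_eq : \int[mu]_(x in `[t, L]) psiL x + \int[mu]_(x in `[t, L]) psiR x
  = (M ^+ 2 + m ^+ 2) / I + 2 * G1 * J.
Proof.
have ik : mu.-integrable `[t, L] (EFin \o k) := kintS t L.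
have ib : mu.-integrable `[t, L] (EFin \o b) by apply: cint.
have ikc c : mu.-integrable `[t, L] (EFin \o (fun x => c * k x)).
  by apply: cint; apply: contM => //; exact: contC.
have ibc c : mu.-integrable `[t, L] (EFin \o (fun x => c * b x)).
  by apply: cint; apply: contM => //; exact: contC.
rewrite /psiL /psiR !RintegralD // !RintegralZl // -/I -/J.
rewrite /cl /cr; field; rewrite gt_eqF //.
Qed.

Let energy_le : (energy a b G L uu gg <= ((M ^+ 2 + m ^+ 2) / I + 2 * G1 * J)%:E)%E.
Proof.
prep.
have -> : energy a b G L uu gg = (\int[mu]_(x in `[(- L)%R, L]) (h x)%:E)%E by [].
rewrite (@itv_bndbnd_setU _ _ (BLeft (- L)) (BRight (- t)) (BRight L)); last 2 first.
  by rewrite bnd_simp; lra.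
  by rewrite bnd_simp; lra.
rewrite ge0_integral_setU //=; first last.
- apply/disj_setPS => y []; rewrite /= !in_itv /= => /andP[_ h1] /andP[h2 _]; lra.
- by move=> x _; rewrite lee_fin.
- rewrite -itv_bndbnd_setU; [|by rewrite bnd_simp; lra| by rewrite bnd_simp; lra].
  by apply: hm => //.
rewrite (@itv_bndbnd_setU _ _ (BRight (- t)) (BRight t) (BRight L)); last 2 first.
  by rewrite bnd_simp; lra.
  by rewrite bnd_simp; lra.
rewrite ge0_integral_setU //=; first last.
- apply/disj_setPS => y []; rewrite /= !in_itv /= => /andP[_ h1] /andP[h2 _]; lra.
- by move=> x _; rewrite lee_fin.
- rewrite -itv_bndbnd_setU; [|by rewrite bnd_simp; lra| by rewrite bnd_simp; lra].
  by apply: hm => //; apply: subset_itv; rewrite bnd_simp; lra.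
rewrite hB add0e -final_eq EFinD.
exact: leeD.
Qed.


Lemma main_bound : (inf_energy a b G L m <=
    ((M ^+ 2 + m ^+ 2) / (\int[mu]_(x in `[t, L]) (a x)^-1)
     + 2 * sup [set G s | s in `]- m, Num.max m M[] * (\int[mu]_(x in `[t, L]) b x))%:E)%E.
Proof.
apply: ereal_inf_le; exists (energy a b G L uu gg); last exact: energy_le.
exists uu, gg; split => //.
split; first exact: (measurable_funS _ _ gm).
split; first exact: gint.
split; first exact: g2int.
by split.
Qed.

End Main.

Theorem proposition5p2 (R : realType) (a b G : R -> R) (M L m t : R) :
  continuous a -> continuous b -> continuous G ->
  (forall x, a (- x) = a x) -> (forall x, b (- x) = b x) ->
  (forall x, G (- x) = G x) ->
  (forall x, 0 < a x) -> (forall x, 0 < b x) ->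
  0 < M -> G M = 0 -> (forall s, G M <= G s) ->
  (forall s, 0 <= s < M -> 0 < G s) ->
  0 < L -> 0 <= m -> 0 <= t < L ->
  let Mbar := Num.max m M in
  let G1 := sup [set G s | s in `]- m, Mbar[] in
  (inf_energy a b G L m <=
    ((M ^+ 2 + m ^+ 2) / (\int[@lebesgue_measure R]_(x in `[t, L]) (a x)^-1)
     + 2 * G1 * (\int[@lebesgue_measure R]_(x in `[t, L]) b x))%:E)%E.
Proof.
move=> ca cb cG ea eb eG a0 b0 M0 GM Gmin _ L0 m0 /andP[t0 tL].
exact: main_bound.
Qed.
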